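(* Consider a congestion game with $m\ge1$ players and $F\ge1$ facilities in which every player has the full action space $\mathcal A_i=2^{\mathcal F}$, and let $\bm a^*$ be a pure Nash equilibrium with counts $n^*_f=n^f(\bm a^* )$. Let $S$ be a set of joint actions consisting of $\bm a^*$ together with, for each facility $f$, fixed joint actions $\bm z_f^{0}$, $\bm z_f^{-}$ (only if $n^*_f\ge1$) and $\bm z_f^{+}$ (only if $n^*_f\le m-1$) whose count vectors $(n^g(\cdot))_{g\in\mathcal F}$ agree with $(n^*_g)_{g}$ on every facility $g\ne f$ and have count on $f$ equal to $0$, $n^*_f-1$ and $n^*_f+1$ respectively (so $|S|\le 3F+1$). Let $\rho$ be uniform on $S$ and let $\bm a^1,\dots,\bm a^n$ be i.i.d. from $\rho$. Let $\delta\in(0,1)$. If $n\ge 8(3F+1)\log((3F+1)/\delta)$, then with probability at least $1-\delta$, for every $i\in[m]$ and every $\pi_i\in\Delta(\mathcal A_i)$, $$V\succeq I+\frac{n}{24F^3}\,\mathbb E_{\bm a\sim(\pi_i,\bm a^*_{-i})}\big[A_i(\bm a)A_i(\bm a)^\top\big],$$ where $(\pi_i,\bm a^*_{-i})$ denotes player $i$ playing $\pi_i$ and every other player $j$ playing $a^*_j$. That is, Assumption (Strong Covariance Domination) holds with $C_{\mathrm{game}}=\frac{1}{24F^3}$ and $\pi^*=\bm a^*$.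
   Context: Congestion game: $m$ players, finite facility set $\mathcal F$ with $F=|\mathcal F|$, action sets $\mathcal A_i\subseteq 2^{\mathcal F}$, $\mathcal A=\prod_i\mathcal A_i$, $n^f(\bm a)=|\{i: f\in a_i\}|$; facility $f$ with $\ell\ge1$ users has mean reward $r^f(\ell)$ and player $i$'s mean reward is $r_i(\bm a)=\sum_{f\in a_i}r^f(n^f(\bm a))$. A pure Nash equilibrium is a joint action $\bm a^*$ such that no player can increase $r_i$ by changing only its own action. Feature maps: let $d=mF$ and index coordinates of $\mathbb R^d$ by pairs $(f,\ell)$, $f\in\mathcal F$, $\ell\in\{1,\dots,m\}$, with standard basis vectors $e_{(f,\ell)}$. For $i\in[m]$, $A_i(\bm a)=\sum_{f\in a_i}e_{(f,n^f(\bm a))}$, and the game-level feature is $A(\bm a)=\sum_{i=1}^m A_i(\bm a)=\sum_{f:\,n^f(\bm a)\ge1}n^f(\bm a)\,e_{(f,n^f(\bm a))}$, so that the total reward has mean $\langle A(\bm a),\theta\rangle$ with $\theta_{(f,\ell)}=r^f(\ell)$. Game-level covariance matrix: $V=I+\sum_{k=1}^n A(\bm a^k)A(\bm a^k)^\top$, where $\bm a^1,\dots,\bm a^n$ are the joint actions in the dataset. $\succeq$ is the positive semidefinite (Loewner) order. *)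

(* Defs.v *)
From HB Require Import structures.
From mathcomp Require Import all_boot all_order all_algebra.
From mathcomp Require Import boolp reals exp.
Set Implicit Arguments. Unset Strict Implicit. Unset Printing Implicit Defensive.
Import Order.TTheory GRing.Theory Num.Theory.
Local Open Scope ring_scope.

Definition jact (m F : nat) := {ffun 'I_m -> {set 'I_F}}.

Definition cnt (m F : nat) (a : jact m F) (f : 'I_F) : nat := #|[set i | f \in a i]|.

Definition reward (R : numDomainType) (m F : nat) (r : 'I_F -> nat -> R)
  (a : jact m F) (i : 'I_m) : R := \sum_(f in a i) r f (cnt a f).

Definition deviate (m F : nat) (a : jact m F) (i : 'I_m) (b : {set 'I_F}) : jact m F :=
  [ffun j => if j == i then b else a j].

Definition is_PNE (R : numDomainType) (m F : nat) (r : 'I_F -> nat -> R) (a : jact m F) :=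
  forall (i : 'I_m) (b : {set 'I_F}), reward r (deviate a i b) i <= reward r a i.

(* standard basis vector e_{(f,l)} of R^{F*m}, l in {1..m}; coordinate (f,l)
   is mxvec_index f (l-1) *)
Definition basis_e (R : numDomainType) (m F : nat) (f : 'I_F) (l : nat) : 'cV[R]_(F * m) :=
  \col_k ([exists j : 'I_m, (val j == l.-1) && (k == mxvec_index f j)])%:R.

Definition feat_i (R : numDomainType) (m F : nat) (a : jact m F) (i : 'I_m) : 'cV[R]_(F * m) :=
  \sum_(f in a i) basis_e R m f (cnt a f).

Definition feat (R : numDomainType) (m F : nat) (a : jact m F) : 'cV[R]_(F * m) :=
  \sum_(i < m) feat_i R a i.

Definition covV (R : numDomainType) (m F n : nat) (w : {ffun 'I_n -> jact m F}) : 'M[R]_(F * m) :=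
  1%:M + \sum_(k < n) (feat R (w k) *m (feat R (w k))^T).

Definition psd_ge (R : numDomainType) (d : nat) (M N : 'M[R]_d) : Prop :=
  forall x : 'cV[R]_d, 0 <= (x^T *m (M - N) *m x) 0 0.

Definition is_dist (R : numDomainType) (F : nat) (pi : {ffun {set 'I_F} -> R}) : Prop :=
  (forall b, 0 <= pi b) /\ \sum_b pi b = 1.

Definition exp_outer (R : numDomainType) (m F : nat) (a : jact m F) (i : 'I_m)
  (pi : {ffun {set 'I_F} -> R}) : 'M[R]_(F * m) :=
  \sum_b pi b *: (feat_i R (deviate a i b) i *m (feat_i R (deviate a i b) i)^T).

Definition prob_iid (R : numFieldType) (m F n : nat) (S : {set jact m F})
  (E : {ffun 'I_n -> jact m F} -> Prop) : R :=
  (#|[set w : {ffun 'I_n -> jact m F} | [forall k, w k \in S] && `[< E w >]]|%:R)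
  / ((#|S| ^ n)%:R).

(* Main.v *)
Require Import Defs.
From HB Require Import structures.
From mathcomp Require Import all_boot all_order all_algebra.
From mathcomp Require Import boolp reals sequences exp.
From mathcomp Require Import ring lra zify.
Import Order.TTheory GRing.Theory Num.Theory.
Set Implicit Arguments. Unset Strict Implicit. Unset Printing Implicit Defensive.
Local Open Scope ring_scope.



Definition dot (R : realType) (d : nat) (u x : 'cV[R]_d) : R :=
  \sum_k u k 0 * x k 0.
Arguments dot {R d}.

Lemma dotB (R : realType) d (u v x : 'cV[R]_d) :
  dot (u - v) x = dot u x - dot v x.
Proof. by rewrite /dot -sumrB; apply: eq_bigr => k _; rewrite !mxE mulrBl. Qed.

Lemma dotMn (R : realType) d (u x : 'cV[R]_d) c :
  dot (u *+ c) x = dot u x *+ c.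
Proof. by rewrite /dot -sumrMnl; apply: eq_bigr => k _; rewrite mulmxnE mulrnAl. Qed.

Lemma dot_sum (R : realType) d (I : finType) (P : pred I) (U : I -> 'cV[R]_d) x :
  dot (\sum_(i | P i) U i) x = \sum_(i | P i) dot (U i) x.
Proof.
rewrite /dot; under eq_bigr do rewrite summxE mulr_suml.
by rewrite exchange_big.
Qed.

Lemma dotE (R : realType) d (u x : 'cV[R]_d) : (u^T *m x) 0 0 = dot u x.
Proof. by rewrite mxE; apply: eq_bigr => k _; rewrite mxE. Qed.
Lemma dotE' (R : realType) d (u x : 'cV[R]_d) : (x^T *m u) 0 0 = dot u x.
Proof. by rewrite mxE; apply: eq_bigr => k _; rewrite mxE mulrC. Qed.
Lemma Q_outer (R : realType) d (u x : 'cV[R]_d) :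
  (x^T *m (u *m u^T) *m x) 0 0 = dot u x ^+ 2.
Proof.
rewrite !mulmxA -mulmxA [LHS]mxE big_ord1 expr2.
by congr (_ * _); [exact: dotE' | exact: dotE].
Qed.

Lemma Q_sum (R : realType) d (I : finType) (P : pred I) (M : I -> 'M[R]_d) (x : 'cV[R]_d) :
  (x^T *m (\sum_(i | P i) M i) *m x) 0 0 = \sum_(i | P i) (x^T *m M i *m x) 0 0.
Proof. by rewrite mulmx_sumr mulmx_suml summxE. Qed.

Lemma Q_scale (R : realType) d (a : R) (M : 'M[R]_d) (x : 'cV[R]_d) :
  (x^T *m (a *: M) *m x) 0 0 = a * (x^T *m M *m x) 0 0.
Proof. by rewrite -scalemxAr -scalemxAl mxE. Qed.

Lemma entryB (R : realType) p q (A B : 'M[R]_(p, q)) i j :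
  (A - B) i j = A i j - B i j.
Proof. by rewrite !mxE. Qed.

Lemma Q_sub (R : realType) d (M N : 'M[R]_d) (x : 'cV[R]_d) :
  (x^T *m (M - N) *m x) 0 0 = (x^T *m M *m x) 0 0 - (x^T *m N *m x) 0 0.
Proof. by rewrite mulmxBr mulmxBl entryB. Qed.

Lemma feat_cnt (R : realType) m F (a : jact m F) :
  feat R a = \sum_f basis_e R m f (cnt a f) *+ cnt a f.
Proof.
rewrite /feat /feat_i; under eq_bigr do rewrite big_mkcond.
rewrite exchange_big; apply: eq_bigr => f _.
rewrite -big_mkcond /= /cnt -sumr_const.
by apply: eq_bigl => i; rewrite inE.
Qed.

Lemma feat_diff (R : realType) m F (z z' : jact m F) f :
  cnt z' f = 0%N -> (forall g, g != f -> cnt z g = cnt z' g) ->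
  feat R z - feat R z' = basis_e R m f (cnt z f) *+ cnt z f.
Proof.
move=> H0 Hg; rewrite !feat_cnt (bigD1 f) //= [X in _ - X](bigD1 f) //= H0 mulr0n add0r.
rewrite (eq_bigr (fun g => basis_e R m g (cnt z' g) *+ cnt z' g)) ?addrK //.
by move=> g hg; rewrite Hg.
Qed.

Lemma cnt_dev m F (a : jact m F) (i : 'I_m) (b : {set 'I_F}) (f : 'I_F) : f \in b ->
  cnt (deviate a i b) f = if f \in a i then cnt a f else (cnt a f).+1.
Proof.
move=> fb; rewrite /cnt (cardsD1 i [set j | f \in deviate a i b j])
  (cardsD1 i [set j | f \in a j]) !inE /deviate ffunE eqxx fb.
have -> : [set j | f \in [ffun j => if j == i then b else a j] j] :\ i =
          [set j | f \in a j] :\ i.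
  by apply/setP => j; rewrite !inE ffunE; case: eqP.
by case: (f \in a i).
Qed.

Lemma cnt_le m F (a : jact m F) (i : 'I_m) (f : 'I_F) : f \notin a i -> (cnt a f <= m.-1)%N.
Proof.
move=> fa; rewrite /cnt -[m in m.-1]card_ord -(cardsC1 i); apply: subset_leq_card.
by apply/subsetP => j; rewrite !inE; apply: contraTneq => ->.
Qed.

Lemma cnt_ge m F (a : jact m F) (i : 'I_m) (f : 'I_F) : f \in a i -> (1 <= cnt a f)%N.
Proof. by move=> fa; rewrite /cnt card_gt0; apply/set0Pn; exists i; rewrite inE. Qed.


Lemma cs_bound (R : realType) (I : finType) (A : {pred I}) (y : I -> R) (c : R) :
  (forall i, i \in A -> y i ^+ 2 <= c) ->
  (\sum_(i in A) y i) ^+ 2 <= c * (#|A| ^ 2)%:R.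
Proof.
move=> Hc.
rewrite expr2 mulr_suml.
have -> : c * (#|A| ^ 2)%:R = \sum_(i in A) \sum_(j in A) c.
  by rewrite sumr_const sumr_const -mulrnA mulr_natr expnS expn1.
apply: ler_sum => i Ai; rewrite mulr_sumr; apply: ler_sum => j Aj.
have := Hc i Ai; have := Hc j Aj; have := sqr_ge0 (y i - y j); rewrite !expr2; nra.
Qed.

Lemma pair_bound (R : realType) (T : finType) (S : {set T}) (h : T -> R) s1 s2 :
  s1 \in S -> s2 \in S -> (h s1 - h s2) ^+ 2 <= 2 * \sum_(s in S) h s ^+ 2.
Proof.
move=> h1 h2; case: (eqVneq s1 s2) => [->|ne].
  by rewrite subrr expr0n mulr_ge0 // sumr_ge0 // => s _; rewrite sqr_ge0.
rewrite (bigD1 s1) //= (bigD1 s2) /=; last by rewrite h2 eq_sym.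
set r := \sum_(i | _) _.
have : 0 <= r by rewrite sumr_ge0 // => s _; rewrite sqr_ge0.
have := sqr_ge0 (h s1 + h s2); rewrite !expr2; lra.
Qed.

Lemma one_coord (R : realType) d (e v w x : 'cV[R]_d) c :
  (1 <= c)%N -> v - w = e *+ c -> dot e x ^+ 2 <= (dot v x - dot w x) ^+ 2.
Proof.
move=> c1 H; rewrite -dotB H dotMn -mulr_natr exprMn.
by apply: ler_peMr; [rewrite sqr_ge0 | apply: exprn_ege1; rewrite ler1n].
Qed.



Lemma key_bound (R : realType) m F (astar : jact m F) (z0 zp : 'I_F -> jact m F)
  (S : {set jact m F}) (i : 'I_m) (b : {set 'I_F}) (x : 'cV[R]_(F * m)) :
  astar \in S -> (forall f, z0 f \in S) ->
  (forall f, (cnt astar f <= m.-1)%N -> zp f \in S) ->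
  (forall f : 'I_F, cnt (z0 f) f = 0%N /\
     forall g : 'I_F, g != f -> cnt (z0 f) g = cnt astar g) ->
  (forall f : 'I_F, (cnt astar f <= m.-1)%N ->
     cnt (zp f) f = (cnt astar f).+1 /\
     forall g : 'I_F, g != f -> cnt (zp f) g = cnt astar g) ->
  dot (feat_i R (deviate astar i b) i) x ^+ 2 <=
    2 * (\sum_(s in S) dot (feat R s) x ^+ 2) * (F ^ 2)%:R.
Proof.
move=> aS z0S zpS Hz0 Hzp.
set G := \sum_(s in S) _.
have G0 : 0 <= G by apply: sumr_ge0 => s _; exact: sqr_ge0.
have Hy : forall f, f \in b ->
    dot (basis_e R m f (cnt (deviate astar i b) f)) x ^+ 2 <= 2 * G.
  move=> f fb; rewrite cnt_dev //; case: ifP => fa.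
    apply: le_trans; last first.
      exact: (pair_bound (fun s => dot (feat R s) x) aS (z0S f)).
    apply: (one_coord _ (cnt_ge fa)).
    apply: feat_diff; first exact: (Hz0 f).1.
    by move=> g hg; rewrite ((Hz0 f).2 g hg).
  have hle : (cnt astar f <= m.-1)%N by apply: (@cnt_le _ _ _ i); rewrite fa.
  apply: le_trans; last first.
    exact: (pair_bound (fun s => dot (feat R s) x) (zpS f hle) (z0S f)).
  have [e1 e2] := Hzp f hle.
  rewrite -e1; apply: (one_coord _ (c := cnt (zp f) f)); first by rewrite e1.
  apply: feat_diff; first exact: (Hz0 f).1.
  by move=> g hg; rewrite e2 ?((Hz0 f).2 g hg).
rewrite /feat_i.
have -> : deviate astar i b i = b by rewrite /deviate ffunE eqxx.
rewrite dot_sum.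
apply: le_trans (cs_bound Hy) _.
apply: ler_wpM2l; first by rewrite mulr_ge0.
by rewrite ler_nat leq_exp2r // -[X in (_ <= X)%N]card_ord max_card.
Qed.



Definition Ncount (T : finType) n (w : {ffun 'I_n -> T}) (s : T) : nat :=
  #|[set j | w j == s]|.

Lemma regroup (R : realType) (T : finType) n (w : {ffun 'I_n -> T}) (S : {set T}) (h : T -> R) :
  (forall j, w j \in S) ->
  \sum_j h (w j) = \sum_(s in S) h s *+ Ncount w s.
Proof.
move=> wS; rewrite (partition_big w (mem S)) /=; last by move=> j _; exact: wS.
apply: eq_bigr => s _.
rewrite (eq_bigr (fun _ => h s)); last by move=> j /eqP ->.
rewrite /Ncount -sumr_const; apply: eq_bigl => j; by rewrite inE.
Qed.

Lemma det_step (R : realType) m F (astar : jact m F) (z0 zp : 'I_F -> jact m F)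
  (S : {set jact m F}) n (w : {ffun 'I_n -> jact m F}) (i : 'I_m)
  (pi : {ffun {set 'I_F} -> R}) (x : 'cV[R]_(F * m)) :
  (0 < F)%N -> (#|S| <= 3 * F + 1)%N ->
  astar \in S -> (forall f, z0 f \in S) ->
  (forall f, (cnt astar f <= m.-1)%N -> zp f \in S) ->
  (forall f : 'I_F, cnt (z0 f) f = 0%N /\
     forall g : 'I_F, g != f -> cnt (z0 f) g = cnt astar g) ->
  (forall f : 'I_F, (cnt astar f <= m.-1)%N ->
     cnt (zp f) f = (cnt astar f).+1 /\
     forall g : 'I_F, g != f -> cnt (zp f) g = cnt astar g) ->
  (forall j, w j \in S) ->
  (forall s, s \in S -> (n <= 2 * #|S| * Ncount w s)%N) ->
  is_dist pi ->
  0 <= (x^T *m (covV R w - (1%:M + (n%:R / (24 * F%:R ^+ 3)) *: exp_outer astar i pi)) *m x) 0 0.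
Proof.
move=> F0 Sk aS z0S zpS Hz0 Hzp wS Nbig [pi0 pi1].
have k0 : (0 < #|S|)%N by apply/card_gt0P; exists astar.
rewrite /covV opprD addrACA subrr add0r Q_sub Q_scale Q_sum /exp_outer Q_sum.
under eq_bigr do rewrite Q_outer.
under [X in _ - _ * X]eq_bigr do rewrite Q_scale Q_outer.
rewrite (regroup (fun s => dot (feat R s) x ^+ 2) wS).
set G := \sum_(s in S) dot (feat R s) x ^+ 2.
have G0 : 0 <= G by apply: sumr_ge0 => s _; exact: sqr_ge0.
set k := #|S| in Sk k0 Nbig *.
have k0' : (0 : R) < k%:R by rewrite ltr0n.
have H1 : G * (n%:R / (2 * k%:R)) <= \sum_(s in S) dot (feat R s) x ^+ 2 *+ Ncount w s.
  rewrite /G mulr_suml; apply: ler_sum => s sS.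
  rewrite -[_ *+ Ncount w s]mulr_natr; apply: ler_wpM2l; first exact: sqr_ge0.
  rewrite ler_pdivrMr ?mulr_gt0 // -(natrM R 2 k) -natrM ler_nat mulnC; exact: Nbig.
have H2 : \sum_b pi b * dot (feat_i R (deviate astar i b) i) x ^+ 2 <= 2 * G * (F ^ 2)%:R.
  apply: le_trans (_ : \sum_b pi b * (2 * G * (F ^ 2)%:R) <= _).
    apply: ler_sum => b _; apply: ler_wpM2l; first exact: pi0.
    exact: (@key_bound R m F astar z0 zp S i b x aS z0S zpS Hz0 Hzp).
  by rewrite -mulr_suml pi1 mul1r.
set c := n%:R / _.
have c0 : 0 <= c by rewrite /c divr_ge0 // mulr_ge0 // exprn_ge0.
have F0' : (0 : R) < F%:R by rewrite ltr0n.
have e : c * (2 * G * (F ^ 2)%:R) = (n%:R * G) / (12 * F%:R).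
  by rewrite /c natrX; field; rewrite gt_eqF.
have H3 : (n%:R * G) / (12 * F%:R) <= (n%:R * G) / (2 * k%:R).
  apply: ler_wpM2l; first by rewrite mulr_ge0.
  rewrite lef_pV2 ?posrE ?mulr_gt0 //.
  rewrite -(natrM R 2 k) -(natrM R 12 F) ler_nat; lia.
have H4 : c * (\sum_b pi b * dot (feat_i R (deviate astar i b) i) x ^+ 2)
          <= c * (2 * G * (F ^ 2)%:R) by apply: ler_wpM2l.
have e2 : G * (n%:R / (2 * k%:R)) = (n%:R * G) / (2 * k%:R) by rewrite mulrA [G * _]mulrC.
lra.
Qed.



Lemma ln2_le (R : realType) : ln (2 : R) <= 3 / 4.
Proof.
have h1 : (2 : R) <= expR (3 / 4).
  have -> : (3 / 4 : R) = 8%:R * (3 / 32) by rewrite -[8%:R]/(8 : R); field.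
  rewrite expRM_natl.
  apply: (le_trans (_ : 2 <= (1 + 3 / 32) ^+ 8)).
    by rewrite !exprS expr0; lra.
  apply: lerXn2r; rewrite ?nnegrE ?expR_ge1Dx //; [lra | exact: ltW (expR_gt0 _)].
rewrite -ler_expR lnK //; rewrite posrE; lra.
Qed.

Lemma half_pow (R : realType) (N : nat) : ((1 / 2 : R) ^+ N) = expR (- ln 2) ^+ N.
Proof. by rewrite expRN lnK ?div1r // posrE; lra. Qed.

Lemma pow_step (R : realType) (k n : nat) : (0 < k)%N ->
  (k%:R - 1 / 2 : R) ^+ n <= (k ^ n)%:R * expR (- (n%:R / (2 * k%:R))).
Proof.
move=> k0; have kp : (0 : R) < k%:R by rewrite ltr0n.
have -> : - (n%:R / (2 * k%:R)) = n%:R * (- (1 / (2 * k%:R))) :> R.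
  by field; rewrite gt_eqF.
rewrite expRM_natl natrX -exprMn.
apply: lerXn2r; rewrite ?nnegrE.
- rewrite subr_ge0 (le_trans _ (_ : 1 <= k%:R)) ?ler1n //; lra.
- by rewrite mulr_ge0 ?ltW ?expR_gt0.
have h := expR_ge1Dx (- (1 / (2 * k%:R)) : R).
have -> : (k%:R - 1/2 : R) = k%:R * (1 + - (1 / (2 * k%:R))) by field; rewrite gt_eqF.
by apply: ler_wpM2l => //; rewrite ltW.
Qed.



Lemma sum_half (R : realType) (T : finType) (S : {set T}) n (s0 : T) : s0 \in S ->
  \sum_(w : {ffun 'I_n -> T} | w \in ffun_on S) (1 / 2 : R) ^+ Ncount w s0 = (#|S|%:R - 1 / 2) ^+ n.
Proof.
move=> s0S.
pose g (s : T) : R := if s == s0 then 1 / 2 else 1.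
have Hg : \sum_(s in S) g s = #|S|%:R - 1 / 2.
  rewrite (bigD1 s0) //= /g eqxx.
  rewrite (eq_bigr (fun _ => 1)); last by move=> s /andP [_ /negPf ->].
  rewrite sumr_const (cardD1 s0 S) s0S /= natrD.
  rewrite [#|[predD1 _ & _]|](_ : _ = #|[pred s | (s \in S) && (s != s0)]|).
    lra.
  by apply: eq_card => s; rewrite !inE andbC.
rewrite -Hg -[n in RHS]card_ord -prodr_const.
rewrite (bigA_distr_big (mem S) (fun (_ : 'I_n) s => g s)).
apply: eq_big => [w|w _]; first by [].
rewrite (bigID (fun j => w j == s0)) /=.
have -> : \prod_(j | ~~ (w j == s0)) g (w j) = 1.
  by rewrite big1 // => j /negPf h; rewrite /g h.
rewrite mulr1 /Ncount.
rewrite (eq_bigr (fun _ => 1 / 2)); last by move=> j h; rewrite /g h.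
rewrite (eq_bigl (fun j => j \in [set j | w j == s0])); last by move=> j; rewrite inE.
by rewrite prodr_const.
Qed.

Lemma bad_bound (R : realType) (T : finType) (S : {set T}) n (s0 : T) : s0 \in S ->
  (#|[set w : {ffun 'I_n -> T} | (w \in ffun_on S) && (2 * #|S| * Ncount w s0 < n)%N]|%:R : R)
    <= (#|S| ^ n)%:R * expR (- (n%:R / (8 * #|S|%:R))).
Proof.
move=> s0S.
have k0 : (0 < #|S|)%N by apply/card_gt0P; exists s0.
set k := #|S| in k0 *.
have kp : (0 : R) < k%:R by rewrite ltr0n.
set B := [set w | _].
set a : R := n%:R / (2 * k%:R).
have a0 : 0 <= a by rewrite /a divr_ge0 // mulr_ge0.
set l : R := ln 2.
have l0 : 0 <= l by rewrite /l ln_ge0 //; lra.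
have l34 : l <= 3 / 4 by exact: ln2_le.
have H1 : #|B|%:R * expR (- (a * l)) <= (k%:R - 1 / 2) ^+ n.
  rewrite -(sum_half R n s0S) mulr_natl -sumr_const.
  apply: (@le_trans _ _ (\sum_(w in B) (1 / 2 : R) ^+ Ncount w s0)).
    apply: ler_sum => w; rewrite inE => /andP [_ hb].
    rewrite half_pow -expRM_natl ler_expR.
    have hN : (Ncount w s0)%:R <= a.
      rewrite /a ler_pdivlMr ?mulr_gt0 // -(natrM R 2 k) -natrM ler_nat.
      rewrite mulnC; exact: ltnW.
    have hN2 : 0 <= a - (Ncount w s0)%:R by rewrite subr_ge0.
    have := mulr_ge0 hN2 l0.
    rewrite -/l; lra.
  rewrite big_mkcond [X in _ <= X]big_mkcond /=.
  apply: ler_sum => w _; rewrite /B inE.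
  case: (w \in ffun_on S) => //=; case: (_ < n)%N => //=.
  apply: exprn_ge0; lra.
have H2 := pow_step R n k0.
have e1 : expR (- (a * l)) * expR (a * l) = 1 by rewrite -expRD addNr expR0.
have Hb : #|B|%:R <= (k ^ n)%:R * expR (- (n%:R / (2 * k%:R))) * expR (a * l).
  have ep : 0 < expR (a * l) by exact: expR_gt0.
  have -> : (#|B|%:R : R) = #|B|%:R * expR (- (a * l)) * expR (a * l) by rewrite -mulrA e1 mulr1.
  apply: ler_wpM2r; first exact: ltW.
  exact: le_trans H1 H2.
apply: (le_trans Hb).
rewrite -mulrA -expRD; apply: ler_wpM2l => //.
rewrite ler_expR.
have -> : n%:R / (2 * k%:R) = a by [].
have -> : n%:R / (8 * k%:R) = a / 4 :> R by rewrite /a; field; rewrite gt_eqF.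
have := ler_wpM2l a0 l34.
lra.
Qed.



Lemma union_bound (R : realType) (T : finType) (S : {set T}) n :
  (#|[set w : {ffun 'I_n -> T} | (w \in ffun_on S) &&
       ~~ [forall s in S, (n <= 2 * #|S| * Ncount w s)%N]]|%:R : R)
  <= \sum_(s in S) #|[set w : {ffun 'I_n -> T} | (w \in ffun_on S) &&
                        (2 * #|S| * Ncount w s < n)%N]|%:R.
Proof.
set k := #|S|.
set B := [set w | _].
pose Bad s := [set w : {ffun 'I_n -> T} | (w \in ffun_on S) && (2 * k * Ncount w s < n)%N].
have cardE : forall X : {set {ffun 'I_n -> T}},
    (#|X|%:R : R) = \sum_w (w \in X)%:R.
  move=> X; rewrite -sumr_const big_mkcond /=; apply: eq_bigr => w _.
  by case: (w \in X).
rewrite cardE.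
apply: (@le_trans _ _ (\sum_w \sum_(s in S) (w \in Bad s)%:R)).
  apply: ler_sum => w _.
  case wB: (w \in B); last by rewrite sumr_ge0.
  move: wB; rewrite inE => /andP [wS /forallPn [s]].
  rewrite negb_imply -ltnNge => /andP [sS hs].
  rewrite (bigD1 s) //= inE wS hs /=.
  by rewrite lerDl sumr_ge0.
rewrite exchange_big /=; apply: ler_sum => s _.
by rewrite cardE.
Qed.

Unset Implicit Arguments. Set Strict Implicit. Set Printing Implicit Defensive.


Theorem mainTheorem9 (R : realType) (m F : nat) (r : 'I_F -> nat -> R)
  (astar : jact m F) (z0 zm zp : 'I_F -> jact m F) (delta : R) (n : nat) :
  (0 < m)%N -> (0 < F)%N ->
  is_PNE r astar ->
  (forall f : 'I_F, cnt (z0 f) f = 0%N /\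
     forall g : 'I_F, g != f -> cnt (z0 f) g = cnt astar g) ->
  (forall f : 'I_F, (1 <= cnt astar f)%N ->
     cnt (zm f) f = (cnt astar f).-1 /\
     forall g : 'I_F, g != f -> cnt (zm f) g = cnt astar g) ->
  (forall f : 'I_F, (cnt astar f <= m.-1)%N ->
     cnt (zp f) f = (cnt astar f).+1 /\
     forall g : 'I_F, g != f -> cnt (zp f) g = cnt astar g) ->
  0 < delta < 1 ->
  8 * (3 * F + 1)%:R * ln ((3 * F + 1)%:R / delta) <= n%:R ->
  let S : {set jact m F} :=
    astar |: ([set z0 f | f : 'I_F]
              :|: [set zm f | f in [set f : 'I_F | (1 <= cnt astar f)%N]]
              :|: [set zp f | f in [set f : 'I_F | (cnt astar f <= m.-1)%N]]) in
  1 - delta <=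
    @prob_iid R m F n S (fun w : {ffun 'I_n -> jact m F} =>
      forall (i : 'I_m) (pi : {ffun {set 'I_F} -> R}), is_dist pi ->
        psd_ge (covV R w)
          (1%:M + (n%:R / (24 * F%:R ^+ 3)) *: exp_outer astar i pi)).
Proof.
move=> m0 F0 _ Hz0 _ Hzp /andP [d0 d1] hn.
cbv zeta.
set S := (astar |: _).
have aS : astar \in S by rewrite /S setU11.
have z0S : forall f, z0 f \in S.
  by move=> f; rewrite /S !in_setU imset_f ?orbT.
have zpS : forall f, (cnt astar f <= m.-1)%N -> zp f \in S.
  by move=> f hf; rewrite /S !in_setU imset_f ?orbT // inE.
have Sk : (#|S| <= 3 * F + 1)%N.
  rewrite /S cardsU1.
  have c1 : forall (A : {pred 'I_F}) (g : 'I_F -> jact m F), (#|g @: A| <= F)%N.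
    move=> A g; apply: (leq_trans (leq_imset_card _ _)).
    by rewrite -[X in (_ <= X)%N]card_ord max_card.
  have cU : forall A B : {set jact m F}, (#|A :|: B| <= #|A| + #|B|)%N.
    by move=> A B; rewrite cardsU leq_subr.
  rewrite addnC; apply: leq_add; last exact: leq_b1.
  have -> : (3 * F = F + F + F)%N by lia.
  apply: (leq_trans (cU _ _)); apply: leq_add; last exact: c1.
  by apply: (leq_trans (cU _ _)); apply: leq_add; exact: c1.
set k := #|S| in Sk *.
have k0 : (0 < k)%N by apply/card_gt0P; exists astar.
pose good (w : {ffun 'I_n -> jact m F}) :=
  [forall s in S, (n <= 2 * k * Ncount w s)%N].
set P := (fun w : {ffun 'I_n -> jact m F} => _).
have Pgood : forall w, w \in ffun_on S -> good w -> P w.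
  move=> w /ffun_onP wS /forallP g i pi hpi x.
  have Nbig : forall s, s \in S -> (n <= 2 * #|S| * Ncount w s)%N.
    by move=> s sS; have := g s; rewrite sS.
  exact: (@det_step R m F astar z0 zp S n w i pi x F0 Sk aS z0S zpS Hz0 Hzp wS Nbig hpi).
rewrite /prob_iid -/k.
set Good := [set w | _ && _].
pose A := [set w : {ffun 'I_n -> jact m F} in ffun_on S].
pose B := [set w | good w].
have cardA : #|A| = (k ^ n)%N by rewrite /A cardsE card_ffun_on card_ord.
have hsplit := cardsID B A.
have sub1 : A :&: B \subset Good.
  apply/subsetP => w; rewrite !inE => /andP [wS gw]; apply/andP; split.
    by apply/forallP => j; exact: (ffun_onP wS).
  by apply: asboolT; exact: Pgood.
have diffE : A :\: B = [set w | (w \in ffun_on S) && ~~ good w].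
  by apply/setP => w; rewrite !inE andbC.
have hU := union_bound R S n.
rewrite -/k -diffE in hU.
have hBad : \sum_(s in S) (#|[set w : {ffun 'I_n -> jact m F} | (w \in ffun_on S) &&
                        (2 * k * Ncount w s < n)%N]|%:R : R)
   <= \sum_(s in S) ((k ^ n)%:R * expR (- (n%:R / (8 * k%:R)))).
  by apply: ler_sum => s sS; exact: bad_bound.
rewrite sumr_const -/k in hBad.
set K : R := (3 * F + 1)%:R.
have kp : (0 : R) < k%:R by rewrite ltr0n.
have hK : k%:R <= K by rewrite /K ler_nat.
have Kp : 0 < K by apply: lt_le_trans hK.
have Kd : 0 < K / delta by rewrite divr_gt0.
have e1 : expR (- (n%:R / (8 * k%:R))) <= expR (- (n%:R / (8 * K))).
  rewrite ler_expR lerN2; apply: ler_wpM2l => //.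
  by rewrite lef_pV2 ?posrE ?mulr_gt0 // ler_wpM2l.
have e2 : expR (- (n%:R / (8 * K))) <= expR (- ln (K / delta)).
  rewrite ler_expR lerN2 ler_pdivlMr ?mulr_gt0 //.
  by rewrite mulrC; exact: hn.
have e3 : expR (- ln (K / delta)) = delta / K.
  by rewrite expRN lnK ?posrE // invf_div.
have hkd : k%:R * expR (- (n%:R / (8 * k%:R))) <= delta.
  apply: (le_trans (ler_wpM2l (ltW kp) (le_trans e1 e2))).
  rewrite e3 mulrA ler_pdivrMr // mulrC ler_wpM2l //; exact: ltW.
have knp : (0 : R) < (k ^ n)%:R by rewrite ltr0n expn_gt0 k0.
rewrite ler_pdivlMr //.
have hG : (#|A :&: B|%:R : R) <= #|Good|%:R by rewrite ler_nat subset_leq_card.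
have hs : (#|A :&: B|%:R : R) + #|A :\: B|%:R = (k ^ n)%:R by rewrite -natrD hsplit cardA.
have hB2 : (#|A :\: B|%:R : R) <= (k ^ n)%:R * (k%:R * expR (- (n%:R / (8 * k%:R)))).
  apply: (le_trans hU); apply: (le_trans hBad).
  by rewrite -[_ *+ k]mulr_natr -mulrA [expR _ * _]mulrC.
have hB3 := ler_wpM2l (ltW knp) hkd.
nra.
Qed.
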